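(* Let $P$ be a program in normal form over a propositional signature $\Sigma$, and $q\in\Sigma$. If $P$ is $q$-forgettable, then $\langle P,\{q\}\rangle$ does not satisfy criterion $\Omega$.
   Context: A program over $\Sigma$ is a finite set of rules $r$ of the form $a_1\vee\dots\vee a_k\leftarrow b_1,\dots,b_l,\ not\,c_1,\dots,not\,c_m,\ not\,not\,d_1,\dots,not\,not\,d_n$ with atoms in $\Sigma$; write $H(r)=\{a_i\}$, $B^+(r)=\{b_i\}$, $B^-(r)=\{c_i\}$, $B^{--}(r)=\{d_i\}$, $B(r)=B^+(r)\cup\{not\,c: c\in B^-(r)\}\cup\{not\,not\,d:d\in B^{--}(r)\}$. $\Sigma(r)$, $\Sigma(P)$ are the atoms occurring in $r$, $P$. Reduct: $P^I=\{H(r)\leftarrow B^+(r): r\in P, B^-(r)\cap I=\emptyset, B^{--}(r)\subseteq I\}$. $I$ classically satisfies $r$ if $B^+(r)\subseteq I$, $B^-(r)\cap I=\emptyset$, $B^{--}(r)\subseteq I$ imply $H(r)\cap I\ne\emptyset$. An HT-interpretation $\langle X,Y\rangle$ ($X\subseteq Y$) is an HT-model of $P$ if $Y$ classically satisfies all rules of $P$ and $X$ all rules of $P^Y$; $\mathcal{HT}(P)$ is the set of HT-models with $X,Y\subseteq\Sigma(P)$. Normal form: $P$ is in normal form if (i) for every atom $a$ and $r\in P$ at most one of $a$, $not\,a$, $not\,not\,a$ is in $B(r)$; (ii) if $a\in H(r)$ then neither $a$ nor $not\,a$ is in $B(r)$; (iii) there are no $r,r'\in P$ with ($H(r')\subseteq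 H(r)$ and $B(r')\subsetneq B(r)$) or ($H(r')\subsetneq H(r)$ and $B(r')\subseteq B(r)$). A self-cycle on $q$ is a rule $r$ with $q\in H(r)$ and $q\in B^{--}(r)$. A program $P$ in normal form is $q$-forgettable if at least one holds: (a) every rule of $P$ in which $q$ occurs is a self-cycle on $q$; (b) $P$ contains the fact $q\leftarrow$ (the rule with head $\{q\}$ and empty body); (c) $P$ contains no self-cycle on $q$. Criterion $\Omega$: for a program $P$, $V\subseteq\Sigma$, $Y\subseteq\Sigma\setminus V$, $A\subseteq V$, let $R^{Y,A}=\{X\setminus V:\langle X,Y\cup A\rangle\in\mathcal{HT}(P)\}$, $Rel^Y=\{A\subseteq V:\langle Y\cup A,Y\cup A\rangle\in\mathcal{HT}(P)$ and no $A'\subsetneq A$ has $\langle Y\cup A',Y\cup A\rangle\in\mathcal{HT}(P)\}$, $\mathcal{R}^Y=\{R^{Y,A}:A\in Rel^Y\}$. $\langle P,V\rangle$ satisfies $\Omega$ if there is $Y\subseteq\Sigma\setminus V$ such that $\mathcal{R}^Y$ is non-empty and has no least element with respect to $\subseteq$. *)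

(* Defs.v *)
From mathcomp Require Import all_boot.
Set Implicit Arguments. Unset Strict Implicit. Unset Printing Implicit Defensive.

Section Programs.
Variable Sigma : finType.

(* A rule  H <- B+, not B-, not not B--  is the quadruple (H, B+, B-, B--). *)
Definition rule := ({set Sigma} * {set Sigma} * {set Sigma} * {set Sigma})%type.
Definition program := {set rule}.

Definition H   (r : rule) : {set Sigma} := r.1.1.1.
Definition Bp  (r : rule) : {set Sigma} := r.1.1.2.
Definition Bn  (r : rule) : {set Sigma} := r.1.2.
Definition Bnn (r : rule) : {set Sigma} := r.2.

(* Body literals: inl (inl a) = a,  inl (inr a) = not a,  inr a = not not a. *)
Definition literal := (Sigma + Sigma + Sigma)%type.
Definition B (r : rule) : {set literal} :=
  [set (inl (inl a) : literal) | a in Bp r]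
  :|: [set (inl (inr a) : literal) | a in Bn r]
  :|: [set (inr a : literal) | a in Bnn r].

Definition atoms_rule (r : rule) : {set Sigma} := H r :|: Bp r :|: Bn r :|: Bnn r.
Definition atoms (P : program) : {set Sigma} := \bigcup_(r in P) atoms_rule r.

Definition reduct (P : program) (I : {set Sigma}) : program :=
  [set ((H r, Bp r, set0, set0) : rule) | r in P & [disjoint Bn r & I] && (Bnn r \subset I)].

Definition csat (I : {set Sigma}) (r : rule) : bool :=
  [&& Bp r \subset I, [disjoint Bn r & I] & Bnn r \subset I] ==> ~~ [disjoint H r & I].

Definition HTmodel (P : program) (X Y : {set Sigma}) : bool :=
  [&& X \subset Y, X \subset atoms P, Y \subset atoms P,
      [forall r in P, csat Y r] & [forall r in reduct P Y, csat X r]].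

Definition normal_form (P : program) : bool :=
  [forall r in P,
     [&& [disjoint Bp r & Bn r], [disjoint Bp r & Bnn r], [disjoint Bn r & Bnn r],
         [disjoint H r & Bp r] & [disjoint H r & Bn r]]]
  && [forall r in P, forall r' in P,
        ~~ (((H r' \subset H r) && (B r' \proper B r))
            || ((H r' \proper H r) && (B r' \subset B r)))].

Definition self_cycle (q : Sigma) (r : rule) : bool := (q \in H r) && (q \in Bnn r).

Definition forgettable (P : program) (q : Sigma) : bool :=
  [forall r in P, (q \in atoms_rule r) ==> self_cycle q r]
  || (((([set q], set0, set0, set0) : rule)) \in P)
  || [forall r in P, ~~ self_cycle q r].

Definition Rset (P : program) (V Y A : {set Sigma}) : {set {set Sigma}} :=
  [set X :\: V | X in [set X | HTmodel P X (Y :|: A)]].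

Definition Rel (P : program) (V Y : {set Sigma}) : {set {set Sigma}} :=
  [set A : {set Sigma} | (A \subset V) && HTmodel P (Y :|: A) (Y :|: A)
           && [forall A' : {set Sigma}, (A' \proper A) ==> ~~ HTmodel P (Y :|: A') (Y :|: A)]].

Definition Rfam (P : program) (V Y : {set Sigma}) : {set {set {set Sigma}}} :=
  [set Rset P V Y A | A in Rel P V Y].

Definition Omega (P : program) (V : {set Sigma}) : Prop :=
  exists Y : {set Sigma}, (Y \subset ~: V) /\ Rfam P V Y != set0 /\
    ~ (exists2 R0, R0 \in Rfam P V Y & forall R, R \in Rfam P V Y -> R0 \subset R).

End Programs.

(* Main.v *)
Require Import Defs.
From mathcomp Require Import all_boot.
Set Implicit Arguments. Unset Strict Implicit.

Lemma ndisjP (T : finType) (A B : {set T}) :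
  ~~ [disjoint A & B] -> exists2 x, x \in A & x \in B.
Proof.
rewrite -setI_eq0 => /set0Pn [x]; rewrite inE => /andP [] ; by exists x.
Qed.

Lemma ndisjI (T : finType) (A B : {set T}) x :
  x \in A -> x \in B -> ~~ [disjoint A & B].
Proof. by move=> xA xB; rewrite -setI_eq0; apply/set0Pn; exists x; rewrite inE xA. Qed.

Lemma disjP (T : finType) (A B : {set T}) :
  reflect (forall x, x \in A -> x \in B -> False) [disjoint A & B].
Proof.
rewrite -setI_eq0; apply: (iffP eqP) => [e x xA xB|h].
  have : x \in A :&: B by rewrite inE xA xB.
  by rewrite e inE.
by apply/setP => x; rewrite !inE; apply/negP => /andP [] /h h' /h'.
Qed.

Lemma disjW (T : finType) (A B C : {set T}) :
  B \subset C -> [disjoint A & C] -> [disjoint A & B].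
Proof.
move=> sBC dAC; apply/disjP => x xA xB.
by move/disjP: dAC => /(_ x xA); apply; apply: (subsetP sBC).
Qed.

Lemma csat_red (Sigma : finType) (I : {set Sigma}) (r : rule Sigma) :
  csat I ((H r, Bp r, set0, set0) : rule Sigma) = (Bp r \subset I) ==> ~~ [disjoint H r & I].
Proof.
rewrite /csat /=.
have -> : [disjoint (Bn ((H r, Bp r, set0, set0) : rule Sigma)) & I] by apply/disjP => x; rewrite /Bn /= inE.
have -> : (Bnn ((H r, Bp r, set0, set0) : rule Sigma)) \subset I by apply/subsetP => x; rewrite /Bnn /= inE.
by rewrite !andbT.
Qed.

Lemma L2 (Sigma : finType) (P : program Sigma) q Y :
  [forall r in P, ~~ self_cycle q r] -> HTmodel P Y Y ->
  HTmodel P (Y :|: [set q]) (Y :|: [set q]) -> HTmodel P Y (Y :|: [set q]).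
Proof.
move=> /forall_inP Hc /and5P [_ YA _ /forall_inP YP _] /and5P [_ _ MA MP' _].
move/forall_inP: (MP') => MP.
apply/and5P; split => //; first by rewrite subsetUl.
apply/forall_inP => r' /imsetP [r]; rewrite inE => /andP [rP /andP [dM sM]] ->.
rewrite csat_red; apply/implyP => sBp; apply/negP => dHY.
have YM : Y \subset Y :|: [set q] by rewrite subsetUl.
have := YP r rP; rewrite /csat sBp (disjW YM dM) /= => cY.
have nB : ~~ (Bnn r \subset Y) by apply: contraL cY => ->; rewrite dHY.
have := MP r rP; rewrite /csat dM sM (subset_trans sBp YM) /= => /ndisjP [x xH xM].
move/subsetPn: nB => [y yB yY].
have yM := subsetP sM y yB.
move: xM yM; rewrite !inE => /orP [xY|/eqP xq]; first by move/disjP: dHY => /(_ x xH xY).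
rewrite (negbTE yY) /= => /eqP yq; subst x y.
by move: (Hc r rP); rewrite /self_cycle xH yB.
Qed.

Lemma L3 (Sigma : finType) (P : program Sigma) q X Y :
  [forall r in P, (q \in atoms_rule r) ==> self_cycle q r] -> HTmodel P X Y ->
  HTmodel P (Y :|: [set q]) (Y :|: [set q]) -> HTmodel P (X :|: [set q]) (Y :|: [set q]).
Proof.
move=> /forall_inP Ha /and5P [XY XA _ _ /forall_inP XP] /and5P [_ _ MA MP' _].
have qA : q \in atoms P by apply: (subsetP MA); rewrite !inE eqxx orbT.
apply/and5P; split => //.
- by apply: setSU.
- by rewrite subUset XA sub1set qA.
apply/forall_inP => r' /imsetP [r]; rewrite inE => /andP [rP /andP [dM sM]] ->.
rewrite csat_red; apply/implyP => sBp.
case qr: (q \in atoms_rule r).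
  move: (Ha r rP); rewrite qr /= /self_cycle => /andP [qH _].
  by apply: (ndisjI qH); rewrite !inE eqxx orbT.
move/negbT: qr; rewrite /atoms_rule !inE !negb_or => /andP [/andP [/andP [qH qBp] qBn] qBnn].
have rY : ((H r, Bp r, set0, set0) : rule Sigma) \in reduct P Y.
  apply/imsetP; exists r => //; rewrite inE rP /=.
  apply/andP; split; first by apply: disjW dM; rewrite subsetUl.
  apply/subsetP => x xB; move: (subsetP sM x xB); rewrite !inE => /orP [//|/eqP xq].
  by subst x; rewrite xB in qBnn.
have := XP _ rY; rewrite csat_red.
have -> : Bp r \subset X.
  apply/subsetP => x xB; move: (subsetP sBp x xB); rewrite !inE => /orP [//|/eqP xq].
  by subst x; rewrite xB in qBp.
move=> /= /ndisjP [x xH xX]; apply: (ndisjI xH); by rewrite inE xX.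
Qed.

Lemma incl (Sigma : finType) (P : program Sigma) (q : Sigma) (Y : {set Sigma}) :
  forgettable P q -> q \notin Y -> set0 \in Rel P [set q] Y -> [set q] \in Rel P [set q] Y ->
  Rset P [set q] Y set0 \subset Rset P [set q] Y [set q].
Proof.
move=> Hf qY; rewrite !inE setU0 => /andP [/andP [_ H0] _] /andP [/andP [_ H1] Hmin].
case/orP: Hf => [/orP [Ha|Hb]|Hc].
- apply/subsetP => R /imsetP [X]; rewrite inE setU0 => HX ->.
  apply/imsetP; exists (X :|: [set q]); first by rewrite inE; apply: L3.
  by rewrite setDUl setDv setU0.
- move/and5P: H0 => [_ _ _ /forall_inP /(_ _ Hb) ] .
  have d0 : [disjoint (set0 : {set Sigma}) & Y] by apply/disjP => x; rewrite inE.
  rewrite /csat /Bp /Bn /Bnn /H /= sub0set d0 /= disjoints1 negbK => qY'.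
  by rewrite qY' in qY.
- move/forall_inP: Hmin => /(_ set0).
  rewrite proper0 setU0 (L2 Hc H0 H1) /=.
  have hq : [set q] != set0 by apply/set0Pn; exists q; rewrite inE.
  by move=> h; move: (h hq).
Qed.

Unset Implicit Arguments.

Theorem theorem4 (Sigma : finType) (P : program Sigma) (q : Sigma) :
  normal_form P -> forgettable P q -> ~ Omega P [set q].
Proof.
move=> _ Hf [Y [HY [Hne Hnl]]]; apply: Hnl.
have qY : q \notin Y by move: (subsetP HY q); rewrite !inE eqxx; case: (q \in Y) => // /(_ isT).
have relsub : forall A, A \in Rel P [set q] Y -> A = set0 \/ A = [set q].
  move=> A; rewrite inE => /andP [/andP [] ]; rewrite subset1 => /orP [/eqP ->|/eqP ->]; by auto.
case: (boolP (set0 \in Rel P [set q] Y)) => H0.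
  exists (Rset P [set q] Y set0); first by apply: imset_f.
  move=> R /imsetP [A HA ->]; case: (relsub A HA) => eA; subst A; first by [].
  exact: incl.
move/set0Pn: Hne => [R /imsetP [A HA _]].
case: (relsub A HA) => eA; first by subst A; rewrite HA in H0.
subst A; exists (Rset P [set q] Y [set q]); first by apply: imset_f.
move=> R' /imsetP [A HA' ->]; case: (relsub A HA') => eA; first by subst A; rewrite HA' in H0.
by subst A.
Qed.
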